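(* Let $(\alpha_1,\alpha_2,\alpha_3)\in[0,1]^3$ with $\alpha_1\ge\alpha_2\ge\alpha_3$. If any of the following holds, then $(\alpha_1,\alpha_2,\alpha_3)$ is not a forcing triple: (a) $\alpha_1<\frac{1+\tau^2}{2}=\frac{52-4\sqrt7}{81}$; (b) $\alpha_2<\frac14$; (c) $\alpha_1+\alpha_2<1$; (d) $\alpha_1=x^2+y^2$ and $\alpha_2=x^2+(1-x-y)^2$ for some nonnegative reals $x,y$ with $x+y\le1$ and $2x^2+(1-x-y)^2<1$.
   Context: $\tau=\frac{4-\sqrt7}{9}$. A $3$-colouring template on an $n$-set $V$ is a triple $(G_1,G_2,G_3)$ of graphs on $V$ (edge sets may overlap). A rainbow triangle is a triple of distinct vertices whose three pairs lie in the three distinct colour classes, one pair per class. A triple $(\alpha_1,\alpha_2,\alpha_3)\in[0,1]^3$ is a forcing triple if for all sufficiently large $n$, every $n$-vertex $3$-colouring template with $|E(G_i)|>\min(\frac{\alpha_i}{2}n^2,\binom n2-1)$ for each $i$ contains a rainbow triangle. *)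

(* Defs.v *)
From HB Require Import structures.
From mathcomp Require Import all_boot all_order all_algebra.
From mathcomp Require Import reals.
Set Implicit Arguments. Unset Strict Implicit. Unset Printing Implicit Defensive.
Import Order.TTheory GRing.Theory Num.Theory.
Local Open Scope ring_scope.

Definition graph (n : nat) := {set {set 'I_n}}.

Definition is_graph (n : nat) (G : graph n) : Prop :=
  forall e, e \in G -> #|e| = 2%N.

(* A 3-colouring template on 'I_n is a triple (G1,G2,G3) of graphs
   (edge sets may overlap). *)
Definition is_template (n : nat) (G1 G2 G3 : graph n) : Prop :=
  is_graph G1 /\ is_graph G2 /\ is_graph G3.

(* Since u,v,w range over
   all ordered triples, this covers every bijection pairs -> classes. *)
Definition has_rainbow_triangle (n : nat) (G1 G2 G3 : graph n) : Prop :=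
  exists u v w : 'I_n,
    [/\ u != v, v != w, u != w &
      [/\ [set u; v] \in G1, [set v; w] \in G2 & [set u; w] \in G3]].

Definition forcing_triple (R : realType) (a1 a2 a3 : R) : Prop :=
  exists N : nat, forall n : nat, (N <= n)%N ->
    forall G1 G2 G3 : graph n, is_template G1 G2 G3 ->
      (#|G1|%:R > Num.min (a1 / 2 * n%:R ^+ 2) ('C(n, 2)%:R - 1)) ->
      (#|G2|%:R > Num.min (a2 / 2 * n%:R ^+ 2) ('C(n, 2)%:R - 1)) ->
      (#|G3|%:R > Num.min (a3 / 2 * n%:R ^+ 2) ('C(n, 2)%:R - 1)) ->
      has_rainbow_triangle G1 G2 G3.

Definition tau (R : realType) : R := (4 - Num.sqrt 7) / 9.

(* Main.v *)
Require Import Defs.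
From HB Require Import structures.
From mathcomp Require Import all_boot all_order all_algebra.
From mathcomp Require Import reals.
From mathcomp Require Import zify ring lra.
Import Order.TTheory GRing.Theory Num.Theory.
Local Open Scope ring_scope.

Definition K n (A : {set 'I_n}) : graph n :=
  [set e : {set 'I_n} | (e \subset A) && (#|e| == 2%N)].
Arguments K {n} A.
Definition iv n (m k : nat) : {set 'I_n} := [set i : 'I_n | (m <= i < m + k)%N].

Arguments iv {n} m k.

Lemma card_K n (A : {set 'I_n}) : #|K A| = 'C(#|A|, 2).
Proof. by rewrite -cards_draws. Qed.

Lemma K_graph n (A : {set 'I_n}) : is_graph (K A).
Proof. by move=> e; rewrite inE => /andP[_ /eqP]. Qed.

Lemma mem_K2 n (A : {set 'I_n}) u v : u != v ->
  ([set u; v] \in K A) = (u \in A) && (v \in A).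
Proof. by move=> uv; rewrite inE cards2 uv subUset !sub1set andbT. Qed.

Lemma card_iv n m k : (m + k <= n)%N -> #|@iv n m k| = k.
Proof.
elim: k => [|k IH] le.
  apply/eqP; rewrite cards_eq0; apply/eqP/setP => i; rewrite !inE; lia.
have lt : (m + k < n)%N by lia.
have -> : @iv n m k.+1 = @iv n m k :|: [set Ordinal lt].
  apply/setP => i; rewrite !inE -val_eqE /=; lia.
rewrite cardsU IH ?cards1; last lia.
have -> : @iv n m k :&: [set Ordinal lt] = set0.
  apply/setP => i; rewrite !inE -val_eqE /=; lia.
by rewrite cards0; lia.
Qed.

Section Constr.
Variables (n p q r : nat).
Definition X : {set 'I_n} := iv 0 p.
Definition Y : {set 'I_n} := iv p q.
Definition Z : {set 'I_n} := iv (p + q) r.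
Definition H1 : graph n := K X :|: K Y.
Definition H2 : graph n := K X :|: K Z.
Definition H3 : graph n := K setT :\: K X.

Lemma H_template : is_template H1 H2 H3.
Proof.
split; [|split] => e; rewrite !inE.
- by case/orP => /andP[_ /eqP].
- by case/orP => /andP[_ /eqP].
- by case/andP => _ /andP[_ /eqP].
Qed.

Lemma H_norainbow : ~ has_rainbow_triangle H1 H2 H3.
Proof.
move=> [u [v [w [uv vw uw [h1 h2 h3]]]]].
move: h1 h2 h3; rewrite /H1 /H2 /H3 !in_setU in_setD !mem_K2 // !inE /=.
lia.
Qed.

Lemma K_disj (A B : {set 'I_n}) : (forall i, i \in A -> i \in B -> False) -> K A :&: K B = set0.
Proof.
move=> dAB; apply/setP => e; rewrite !inE.
apply/negP => /andP[/andP[eA /eqP e2] /andP[eB _]].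
have : (0 < #|e|)%N by rewrite e2.
case/card_gt0P => x xe.
exact: (dAB x (subsetP eA x xe) (subsetP eB x xe)).
Qed.

Hypothesis hpqr : (p + q + r <= n)%N.

Lemma card_H1 : #|H1| = ('C(p, 2) + 'C(q, 2))%N.
Proof.
rewrite /H1 cardsU K_disj ?cards0 ?card_K /X /Y ?card_iv; try lia.
by move=> i; rewrite !inE; lia.
Qed.

Lemma card_H2 : #|H2| = ('C(p, 2) + 'C(r, 2))%N.
Proof.
rewrite /H2 cardsU K_disj ?cards0 ?card_K /X /Z ?card_iv; try lia.
by move=> i; rewrite !inE; lia.
Qed.

Lemma card_H3 : (#|H3| + 'C(p, 2))%N = 'C(n, 2).
Proof.
have E : #|K (setT : {set 'I_n})| = 'C(n,2) by rewrite card_K cardsT card_ord.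
rewrite /H3 -E -(cardsID (K X) (K setT)) addnC.
have -> : K setT :&: K X = K X.
  apply/setIidPr/subsetP => e; rewrite !inE => /andP[_ ->]; by rewrite subsetT.
by rewrite !card_K /X card_iv //; lia.
Qed.
End Constr.
Section Real.
Variable R : realType.

Lemma bin2R (p : nat) : ('C(p, 2)%:R : R) * 2 = p%:R * (p%:R - 1).
Proof.
elim: p => [|p IH]; first by rewrite bin0n mul0r mul0r.
rewrite binS bin1 natrD mulrDl IH -natr1; ring.
Qed.

Lemma bin_low (s : R) : 0 <= s ->
  s ^+ 2 - 3 * s <= ('C(Num.truncn s, 2)%:R : R) * 2.
Proof.
move=> s0; rewrite bin2R; move: (Num.Theory.truncn_itv s0) => /andP[h1 h2].
rewrite -natr1 in h2; set P := (Num.truncn s)%:R in h1 h2 *.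
have P0 : 0 <= P by rewrite /P ler0n.
nra.
Qed.

Lemma bin_up (s : R) : 0 <= s ->
  ('C(Num.truncn s, 2)%:R : R) * 2 <= s ^+ 2.
Proof.
move=> s0; rewrite bin2R; move: (Num.Theory.truncn_itv s0) => /andP[h1 h2].
set P := (Num.truncn s)%:R in h1 h2 *.
have P0 : 0 <= P by rewrite /P ler0n.
nra.
Qed.

End Real.

Section Wit.
Variable R : realType.

Definition bigT n (G : graph n) (a : R) :=
  Num.min (a / 2 * n%:R ^+ 2) ('C(n, 2)%:R - 1) < #|G|%:R.
Arguments bigT {n} G a.

Definition witness (a1 a2 a3 : R) := forall N : nat, exists n : nat, (N <= n)%N /\
  exists G1 G2 G3 : graph n, [/\ is_template G1 G2 G3, ~ has_rainbow_triangle G1 G2 G3,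
    bigT G1 a1, bigT G2 a2 & bigT G3 a3].

Lemma witness_nf a1 a2 a3 : witness a1 a2 a3 -> ~ forcing_triple a1 a2 a3.
Proof.
move=> W [N HN]; have [n [Nn [G1 [G2 [G3 [T NR b1 b2 b3]]]]]] := W N.
exact: NR (HN n Nn G1 G2 G3 T b1 b2 b3).
Qed.

Lemma rainbow_swap n (G1 G2 G3 : graph n) :
  has_rainbow_triangle G3 G2 G1 -> has_rainbow_triangle G1 G2 G3.
Proof.
move=> [u [v [w [uv vw uw [h1 h2 h3]]]]].
exists u, w, v; split.
- exact: uw.
- by rewrite eq_sym.
- exact: uv.
- by split => //; rewrite setUC.
Qed.

Lemma witness_swap a1 a2 a3 : witness a3 a2 a1 -> witness a1 a2 a3.
Proof.
move=> W N; have [n [Nn [G1 [G2 [G3 [[T1 [T2 T3]] NR b1 b2 b3]]]]]] := W N.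
exists n; split => //; exists G3, G2, G1; split => //.
by move/rainbow_swap.
Qed.

End Wit.
Arguments bigT {R n} G a.
Arguments witness {R} a1 a2 a3.

Section Gen.
Variable R : realType.

Lemma L12 (x y nn b Cp Cq : R) :
  (x * nn) ^+ 2 - 3 * (x * nn) <= Cp * 2 ->
  (y * nn) ^+ 2 - 3 * (y * nn) <= Cq * 2 ->
  0 <= x -> 0 <= y -> x + y <= 1 -> 0 < nn -> 3 < nn * (x ^+ 2 + y ^+ 2 - b) ->
  b / 2 * nn ^+ 2 < Cp + Cq.
Proof.
move=> h1 h2 x0 y0 xy n0 h.
have : (x + y) * nn <= 1 * nn by rewrite ler_wpM2r ?(ltW n0).
have : 0 < nn * (nn * (x ^+ 2 + y ^+ 2 - b) - 3) by apply: mulr_gt0 => //; lra.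
move: h1 h2; clear; lra.
Qed.

Lemma L3 (x nn b Cn Cp : R) : Cn * 2 = nn * (nn - 1) ->
  Cp * 2 <= (x * nn) ^+ 2 -> 0 < nn -> 1 < nn * (1 - x ^+ 2 - b) ->
  b / 2 * nn ^+ 2 < Cn - Cp.
Proof.
move=> h1 h2 n0 h.
have : 0 < nn * (nn * (1 - x ^+ 2 - b) - 1) by apply: mulr_gt0 => //; lra.
move: h1 h2; clear; lra.
Qed.

Lemma Lsum (x y z nn P Q S : R) : P <= x * nn -> Q <= y * nn -> S <= z * nn ->
  x + y + z <= 1 -> 0 < nn -> P + Q + S <= nn.
Proof.
move=> h1 h2 h3 h n0.
have : (x + y + z) * nn <= 1 * nn by rewrite ler_wpM2r ?(ltW n0).
move: h1 h2 h3; clear; lra.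
Qed.

Lemma Ldiv (c d B nn : R) : 0 < d -> c / d <= B -> B < nn -> c < nn * d.
Proof. by move=> d0 h1 h2; rewrite -ltr_pdivrMr //; apply: le_lt_trans h2. Qed.

Lemma constr (x y z b1 b2 b3 : R) : 0 <= x -> 0 <= y -> 0 <= z -> x + y + z <= 1 ->
  b1 < x ^+ 2 + y ^+ 2 -> b2 < x ^+ 2 + z ^+ 2 -> (b3 < 1 - x ^+ 2 \/ x = 0) ->
  witness b1 b2 b3.
Proof.
move=> x0 y0 z0 xyz hb1 hb2 hb3 N.
pose d1 := x ^+ 2 + y ^+ 2 - b1; pose d2 := x ^+ 2 + z ^+ 2 - b2.
pose d3 := 1 - x ^+ 2 - b3.
have d1p : 0 < d1 by rewrite /d1; lra.
have d2p : 0 < d2 by rewrite /d2; lra.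
pose B := 3 / d1 + 3 / d2 + Num.max 0 (1 / d3).
have t1 : 0 <= 3 / d1 by rewrite divr_ge0 // ltW.
have t2 : 0 <= 3 / d2 by rewrite divr_ge0 // ltW.
have t3 : 0 <= Num.max 0 (1 / d3) by rewrite le_max lexx.
have t3' : 1 / d3 <= Num.max 0 (1 / d3) by rewrite le_max lexx orbT.
have B0 : 0 <= B by rewrite /B; move: t1 t2 t3; clear; lra.
pose n := (N + Num.bound B)%N.
have nB : B < n%:R.
  apply: (lt_le_trans (archi_boundP B0)); by rewrite ler_nat /n leq_addl.
set nn := n%:R in nB.
have n0 : 0 < nn by move: B0 nB; clear; lra.
have Bd1 : 3 / d1 <= B by rewrite /B; move: t2 t3; clear; lra.
have Bd2 : 3 / d2 <= B by rewrite /B; move: t1 t3; clear; lra.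
have Bd3 : 1 / d3 <= B by rewrite /B; move: t1 t2 t3'; clear; lra.
have h1 : 3 < nn * d1 by exact: (Ldiv _ _ _ _ d1p Bd1 nB).
have h2 : 3 < nn * d2 by exact: (Ldiv _ _ _ _ d2p Bd2 nB).
have sx : 0 <= x * nn by rewrite mulr_ge0 // ltW.
have sy : 0 <= y * nn by rewrite mulr_ge0 // ltW.
have sz : 0 <= z * nn by rewrite mulr_ge0 // ltW.
pose p := Num.truncn (x * nn); pose q := Num.truncn (y * nn);
pose r := Num.truncn (z * nn).
have hpqr : (p + q + r <= n)%N.
  rewrite -(ler_nat R) -[n%:R]/nn !natrD.
  move: (Num.Theory.truncn_itv sx) (Num.Theory.truncn_itv sy)
    (Num.Theory.truncn_itv sz) => /andP[p1 _] /andP[q1 _] /andP[r1 _].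
  exact: (Lsum _ _ _ _ _ _ _ p1 q1 r1 xyz n0).
exists n; split; first exact: leq_addr.
exists (H1 n p q), (H2 n p q r), (H3 n p); split.
- exact: H_template.
- exact: H_norainbow.
- rewrite /bigT (@card_H1 n p q r hpqr) natrD gt_min; apply/orP; left.
  have xy1 : x + y <= 1 by move: xyz z0; clear; lra.
  exact: (L12 _ _ _ _ _ _ (@bin_low R _ sx) (@bin_low R _ sy) x0 y0 xy1 n0 h1).
- rewrite /bigT (@card_H2 n p q r hpqr) natrD gt_min; apply/orP; left.
  have xz1 : x + z <= 1 by move: xyz y0; clear; lra.
  exact: (L12 _ _ _ _ _ _ (@bin_low R _ sx) (@bin_low R _ sz) x0 z0 xz1 n0 h2).
- have E := @card_H3 n p q r hpqr; have E' : (#|H3 n p|%:R : R) = 'C(n, 2)%:R - 'C(p, 2)%:R.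
    by rewrite -E natrD; ring.
  rewrite /bigT E' gt_min; apply/orP.
  case: hb3 => [hb3 | hx].
  + left.
    have d3p : 0 < d3 by rewrite /d3; move: hb3; clear; lra.
    have h3 : 1 < nn * d3 by exact: (Ldiv _ _ _ _ d3p Bd3 nB).
    exact: (L3 _ _ _ _ _ (bin2R R n) (@bin_up R _ sx) n0 h3).
  + right; rewrite /p hx mul0r Num.Theory.truncn0 bin0n /= subr0; lra.
Qed.
End Gen.
Section P.
Variable R : realType.
Lemma perturb (x y z a1 a2 a3 : R) : 0 <= x -> 0 <= y -> 0 <= z -> x + y + z = 1 ->
  2 * x ^+ 2 + z ^+ 2 < 1 -> a1 = x ^+ 2 + y ^+ 2 -> a2 = x ^+ 2 + z ^+ 2 ->
  a3 <= a2 -> 1 <= a1 + a2 -> 0 < x ->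
  exists x' y' z' : R, [/\ 0 <= x', 0 <= y', 0 <= z', x' + y' + z' <= 1 &
    [/\ a1 < x' ^+ 2 + y' ^+ 2, a2 < x' ^+ 2 + z' ^+ 2 & a3 < 1 - x' ^+ 2]].
Proof.
move=> x0 y0 z0 s g e1 e2 h23 h12 xp.
have hx1 : x < 1.
  have : x ^+ 2 < 1 by move: g; clear -z0; nra.
  by move: x0; clear; nra.
have yz : y + z = 1 - x by move: s; clear; lra.
have ineq : 2 * (x * y + y * z + z * x) <= x ^+ 2.
  have : (x + y + z) ^+ 2 = 1 by rewrite s expr1n.
  move: h12; rewrite e1 e2; clear; lra.
have xb : 2 * (y + z) <= x.
  have : 2 * x * (y + z) <= x * x.
    have : 0 <= y * z by rewrite mulr_ge0.
    move: ineq; clear; lra.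
  rewrite -mulrA => h; rewrite -(ler_pM2l xp); move: h; clear; lra.
pose t := (1 - 2 * x ^+ 2 - z ^+ 2) / 4.
have t0 : 0 < t by rewrite /t; move: g; clear; lra.
have t1 : t <= 1 / 4 by rewrite /t; have := sqr_ge0 x; have := sqr_ge0 z; clear; lra.
exists (x + t * (1 - x)), ((1 - t) * y), ((1 - t) * z); split.
- by rewrite addr_ge0 // mulr_ge0 //; lra.
- by rewrite mulr_ge0 //; lra.
- by rewrite mulr_ge0 //; lra.
- have -> : x + t * (1 - x) + (1 - t) * y + (1 - t) * z = x + t * (1 - x) + (1 - t) * (y + z) by ring.
  rewrite yz; lra.
have Y1 : y ^+ 2 <= x * (y + z).
  have : 0 <= (y + z) * (x - 2 * (y + z)) by rewrite mulr_ge0 //; lra.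
  have := mulr_ge0 y0 z0; have := sqr_ge0 y; have := sqr_ge0 z.
  clear; lra.
have Z1 : z ^+ 2 <= x * (y + z).
  have : 0 <= (y + z) * (x - 2 * (y + z)) by rewrite mulr_ge0 //; lra.
  have := mulr_ge0 y0 z0; have := sqr_ge0 y; have := sqr_ge0 z.
  clear; lra.
have P0 : 0 < t ^+ 2 * (y + z) ^+ 2.
  by rewrite mulr_gt0 // exprn_gt0 //; lra.
split.
- have P1 : 0 <= t * (x * (y + z) - y ^+ 2) by rewrite mulr_ge0 //; lra.
  have P3 : 0 <= t ^+ 2 * y ^+ 2 by rewrite mulr_ge0 // sqr_ge0.
  rewrite e1; move: P0 P1 P3 yz; clear; nra.
- have P1 : 0 <= t * (x * (y + z) - z ^+ 2) by rewrite mulr_ge0 //; lra.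
  have P3 : 0 <= t ^+ 2 * z ^+ 2 by rewrite mulr_ge0 // sqr_ge0.
  rewrite e2; move: P0 P1 P3 yz; clear; nra.
- have Q1 : t * (x * (1 - x)) <= t.
    apply: ler_piMr; [lra | move: x0 hx1; clear; nra].
  have Q2 : t ^+ 2 * (1 - x) ^+ 2 <= t.
    have : (1 - x) ^+ 2 <= 1 by move: x0 hx1; clear; nra.
    have : t ^+ 2 <= t by move: t0 t1; clear; nra.
    move: t0; clear; nra.
  have tt : t * 4 = 1 - 2 * x ^+ 2 - z ^+ 2 by rewrite /t; field.
  move: Q1 Q2 tt h23 t0; rewrite e2; clear; nra.
Qed.
End P.

Lemma tau_facts (R : realType) : 0 < tau R /\ tau R < 1 / 2 /\
  9 * tau R ^+ 2 - 8 * tau R + 1 = 0.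
Proof.
rewrite /tau; set s := Num.sqrt 7.
have s0 : 0 <= s := sqrtr_ge0 _.
have s2 : s ^+ 2 = 7 by rewrite sqr_sqrtr // ler0n.
have s4 : s < 4 by move: s0 s2; clear; nra.
split; [|split]; move: s0 s2 s4; clear; lra.
Qed.

Theorem mainTheorem4 (R : realType) (a1 a2 a3 : R) :
  0 <= a1 <= 1 -> 0 <= a2 <= 1 -> 0 <= a3 <= 1 ->
  a1 >= a2 -> a2 >= a3 ->
  [\/ a1 < (1 + tau R ^+ 2) / 2,
      a2 < 1 / 4,
      a1 + a2 < 1
    | exists x y : R, [/\ 0 <= x, 0 <= y, x + y <= 1,
        2 * x ^+ 2 + (1 - x - y) ^+ 2 < 1 &
        a1 = x ^+ 2 + y ^+ 2 /\ a2 = x ^+ 2 + (1 - x - y) ^+ 2]] ->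
  ~ forcing_triple a1 a2 a3.
Proof.
move=> /andP[a10 a11] /andP[a20 a21] /andP[a30 a31] h12 h23 cases.
apply: witness_nf.
have caseB : a2 < 1 / 4 -> witness a1 a2 a3.
  move=> hb; apply: witness_swap.
  apply: (@constr R 0 (1/2) (1/2)); try lra.
have caseC : a1 + a2 < 1 -> witness a1 a2 a3.
  move=> hc; apply: witness_swap.
  pose m := (a2 + 1 - a1) / 2.
  have m0 : 0 <= m by rewrite /m; lra.
  have xm : Num.sqrt m ^+ 2 = m by rewrite sqr_sqrtr.
  have x0 : 0 <= Num.sqrt m := sqrtr_ge0 _.
  have x1 : Num.sqrt m <= 1.
    have : m <= 1 by rewrite /m; lra.
    move: xm x0; clear; nra.
  apply: (@constr R (Num.sqrt m) 0 0); rewrite ?xm ?expr0n /= ?addr0 ?add0r //.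
  - rewrite /m; lra.
  - rewrite /m; lra.
  - left; rewrite /m; lra.
case: cases => [ha | hb | hc | [x [y [x0 y0 xy g [e1 e2]]]]].
- have [t0 [t1 tq]] := tau_facts R.
  set t := tau R in ha t0 t1 tq.
  apply: (@constr R (1 - 2 * t) t t); try lra.
- exact: caseB.
- exact: caseC.
- have [hc|hc] := ltP (a1 + a2) 1; first exact: caseC.
  have [hb|hb] := ltP a2 (1 / 4); first exact: caseB.
  set z := 1 - x - y in g e2.
  have z0 : 0 <= z by rewrite /z; lra.
  have s : x + y + z = 1 by rewrite /z; ring.
  have [xz|xp] := eqVneq x 0.
    exfalso.
    have yz : y + z = 1 by move: s; rewrite xz; lra.
    have a1e : a1 = y ^+ 2 by rewrite e1 xz; ring.
    have a2e : a2 = z ^+ 2 by rewrite e2 xz; ring.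
    have : y * z <= 0.
      have : (y + z) ^+ 2 = 1 by rewrite yz expr1n.
      move: hc; rewrite a1e a2e; clear; lra.
    have := mulr_ge0 y0 z0.
    move=> h1 h2; have yz0 : y * z = 0 by apply/eqP; rewrite eq_le h2 h1.
    move: yz0 => /eqP; rewrite mulf_eq0 => /orP[] /eqP h.
    + move: h12; rewrite a1e a2e h; move: yz; rewrite h; clear; nra.
    + move: hb; rewrite a2e h; clear; lra.
  have xpos : 0 < x by rewrite lt_def xp.
  have [x' [y' [z' [x'0 y'0 z'0 s' [c1 c2 c3]]]]] :=
    @perturb R _ _ _ _ _ _ x0 y0 z0 s g e1 e2 h23 hc xpos.
  apply: (@constr R x' y' z') => //.
  by left.
Qed.
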